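(* Let $P$ be a $d$-dimensional $(m+1)$-level polytope. Then the monotone diameter of $P$ is at most $(d-1)m+1$.
   Context: A polytope $P=\{\mathbf{x}: A\mathbf{x}\le \mathbf{b}\}$, with $A\mathbf{x}\le\mathbf{b}$ an irredundant description and vertex set $V(P)$, is $(m+1)$-level if for every row $\mathbf{a}^i$ of $A$, $|\{(\mathbf{a}^i)^{\intercal}\mathbf{v} : \mathbf{v}\in V(P)\}|\le m+1$. A $\mathbf{c}$-monotone path is a sequence of vertices of $P$ in which consecutive vertices are joined by an edge of $P$ and $\mathbf{c}^{\intercal}\mathbf{x}$ strictly increases; its length is its number of edges. The monotone diameter of $P$ is the maximum, over all generic linear objectives $\mathbf{c}$ (not constant on any edge) and all vertices $\mathbf{v}$, of the length of a shortest $\mathbf{c}$-monotone path from $\mathbf{v}$ to the $\mathbf{c}$-maximal vertex. *)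

(* Defs.v *)
From HB Require Import structures.
From mathcomp Require Import all_boot all_order all_algebra.
Set Implicit Arguments. Unset Strict Implicit. Unset Printing Implicit Defensive.
Import Order.TTheory GRing.Theory Num.Theory.
Local Open Scope ring_scope.

Section Polytopes.
Variable R : realFieldType.
Variable n : nat.

Definition dotv (c x : 'cV[R]_n) : R := \sum_(j < n) c j 0 * x j 0.

Definition polyh (k : nat) (A : 'M[R]_(k, n)) (b : 'cV[R]_k) (x : 'cV[R]_n) : Prop :=
  forall i : 'I_k, (A *m x) i 0 <= b i 0.

Definition irredundant (k : nat) (A : 'M[R]_(k, n)) (b : 'cV[R]_k) : Prop :=
  forall i : 'I_k, exists x : 'cV[R]_n,
    (forall j : 'I_k, j != i -> (A *m x) j 0 <= b j 0) /\ ~ ((A *m x) i 0 <= b i 0).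

Definition bounded (P : 'cV[R]_n -> Prop) : Prop :=
  exists M : R, forall x, P x -> forall j : 'I_n, `|x j 0| <= M.

Definition aff_indep (k : nat) (p : 'I_k.+1 -> 'cV[R]_n) : bool :=
  row_free (\matrix_(i < k, j < n) (p (lift ord0 i) j 0 - p ord0 j 0)).

Definition has_dim (P : 'cV[R]_n -> Prop) (d : nat) : Prop :=
  (exists p : 'I_d.+1 -> 'cV[R]_n, (forall i, P (p i)) /\ aff_indep p) /\
  ~ (exists p : 'I_d.+2 -> 'cV[R]_n, (forall i, P (p i)) /\ aff_indep p).

Definition is_vertex (P : 'cV[R]_n -> Prop) (v : 'cV[R]_n) : Prop :=
  P v /\ exists c : 'cV[R]_n, forall x, P x -> x != v -> dotv c x < dotv c v.

Definition in_segment (u v x : 'cV[R]_n) : Prop :=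
  exists t : R, 0 <= t /\ t <= 1 /\ x = (1 - t) *: u + t *: v.

Definition is_edge (P : 'cV[R]_n -> Prop) (u v : 'cV[R]_n) : Prop :=
  is_vertex P u /\ is_vertex P v /\ u != v /\
  exists c : 'cV[R]_n, dotv c u = dotv c v /\
    (forall x, P x -> dotv c x <= dotv c u) /\
    (forall x, P x -> dotv c x = dotv c u -> in_segment u v x).

Definition is_level (k : nat) (A : 'M[R]_(k, n)) (b : 'cV[R]_k) (m : nat) : Prop :=
  forall i : 'I_k, exists s : seq R, (size s <= m.+1)%N /\
    forall v, is_vertex (polyh A b) v -> dotv (row i A)^T v \in s.

Definition generic (P : 'cV[R]_n -> Prop) (c : 'cV[R]_n) : Prop :=
  forall u v, is_edge P u v -> dotv c u != dotv c v.

(* v :: s is a c-monotone path (sequence of vertices, consecutive ones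
   joined by an edge, c strictly increasing); its length is size s *)
Fixpoint mono_path (P : 'cV[R]_n -> Prop) (c : 'cV[R]_n) (v : 'cV[R]_n)
    (s : seq 'cV[R]_n) : Prop :=
  match s with
  | [::] => is_vertex P v
  | w :: s' => is_edge P v w /\ dotv c v < dotv c w /\ mono_path P c w s'
  end.

Definition monotone_diam_le (P : 'cV[R]_n -> Prop) (D : nat) : Prop :=
  forall c : 'cV[R]_n, generic P c ->
  forall v vmax : 'cV[R]_n, is_vertex P v -> is_vertex P vmax ->
    (forall x, P x -> dotv c x <= dotv c vmax) ->
    exists s : seq 'cV[R]_n,
      mono_path P c v s /\ last v s = vmax /\ (size s <= D)%N.

End Polytopes.

(* Main.v *)
Require Import Defs.
From HB Require Import structures.
From mathcomp Require Import all_boot all_order all_algebra.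
From Stdlib Require Import Classical.
From mathcomp Require Import lra.
Import Order.TTheory GRing.Theory Num.Theory.
Local Open Scope ring_scope.
Set Implicit Arguments. Unset Strict Implicit. Unset Printing Implicit Defensive.
Section Basics.
Variables (R : realFieldType) (n : nat).
Implicit Types (c x y z : 'cV[R]_n).

Lemma dotvDr c x y : dotv c (x + y) = dotv c x + dotv c y.
Proof. rewrite /dotv -big_split /=; apply: eq_bigr => j _; by rewrite mxE mulrDr. Qed.
Lemma dotvZr c t x : dotv c (t *: x) = t * dotv c x.
Proof. rewrite /dotv mulr_sumr; apply: eq_bigr => j _; by rewrite mxE mulrCA. Qed.
Lemma dotvNr c x : dotv c (- x) = - dotv c x.
Proof. rewrite /dotv -sumrN; apply: eq_bigr => j _; by rewrite mxE mulrN. Qed.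
Lemma dotvBr c x y : dotv c (x - y) = dotv c x - dotv c y.
Proof. by rewrite dotvDr dotvNr. Qed.
Lemma dotvDl c c' x : dotv (c + c') x = dotv c x + dotv c' x.
Proof. rewrite /dotv -big_split /=; apply: eq_bigr => j _; by rewrite mxE mulrDl. Qed.
Lemma dotvZl c t x : dotv (t *: c) x = t * dotv c x.
Proof. rewrite /dotv mulr_sumr; apply: eq_bigr => j _; by rewrite mxE mulrA. Qed.
Lemma dotv0r c : dotv c 0 = 0.
Proof. rewrite /dotv big1 // => j _; by rewrite mxE mulr0. Qed.
Lemma dotv_suml (I : finType) (Q : pred I) (F : I -> 'cV[R]_n) x :
  dotv (\sum_(i | Q i) F i) x = \sum_(i | Q i) dotv (F i) x.
Proof.
rewrite /dotv exchange_big /=; apply: eq_bigr => j _.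
by rewrite summxE mulr_suml.
Qed.
End Basics.

Section Poly.
Variables (R : realFieldType) (n k : nat) (A : 'M[R]_(k, n)) (b : 'cV[R]_k).
Implicit Types (c x y z w : 'cV[R]_n).
Local Notation P := (polyh A b).

Definition av i : 'cV[R]_n := (row i A)^T.
Definition bv i : R := b i 0.

Lemma mulAE x i : (A *m x) i 0 = dotv (av i) x.
Proof. rewrite /dotv mxE; apply: eq_bigr => j _; by rewrite !mxE. Qed.

Lemma polyhP x : P x <-> forall i, dotv (av i) x <= bv i.
Proof. by split=> H i; [rewrite -mulAE; apply: H | rewrite mulAE; apply: H]. Qed.

Definition tight x i : bool := dotv (av i) x == bv i.

Lemma vertex_ker w : is_vertex P w ->
  forall z, (forall i, tight w i -> dotv (av i) z = 0) -> z = 0.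
Proof.
move=> [Pw [c Hc]] z Hz; apply: NNPP => z0.
have Pw' := Pw; move/polyhP: Pw' => Pw'.
pose sl i := bv i - dotv (av i) w.
have slpos i : ~~ tight w i -> 0 < sl i.
  move=> Ht; rewrite subr_gt0 lt_def; apply/andP; split; last exact: Pw'.
  by rewrite eq_sym.
pose M := \sum_(i | ~~ tight w i) `|dotv (av i) z| / sl i.
have M0 : 0 <= M by apply: sumr_ge0 => i Hi; rewrite divr_ge0 // ltW // slpos.
pose eps := (1 + M)^-1.
have eps0 : 0 < eps by rewrite invr_gt0 ltr_wpDr.
have Pin s : `|s| <= eps -> P (w + s *: z).
  move=> Hs; apply/polyhP => i; rewrite dotvDr dotvZr.
  case Ti: (tight w i); first by rewrite Hz // mulr0 addr0 (eqP Ti).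
  have hi : `|dotv (av i) z| / sl i <= M.
    rewrite /M (bigD1 i) /=; last by rewrite Ti.
    rewrite lerDl; apply: sumr_ge0 => j /andP[Hj _].
    by rewrite divr_ge0 // ltW // slpos.
  have sli := slpos i (negbT Ti).
  have : s * dotv (av i) z <= sl i.
    apply: le_trans (ler_norm _) _; rewrite normrM.
    apply: le_trans (_ : eps * `|dotv (av i) z| <= _).
      by apply: ler_wpM2r.
    have hi' : `|dotv (av i) z| <= M * sl i by rewrite -ler_pdivrMr.
    apply: le_trans (_ : eps * (M * sl i) <= _); first by rewrite ler_wpM2l // ltW.
    rewrite mulrA; apply: ler_piMl; first exact: ltW.
    by rewrite /eps mulrC ler_pdivrMr ?ltr_wpDr // mul1r lerDr.
  by rewrite /sl lerBrDl addrC.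
have ne s : s != 0 -> w + s *: z != w.
  move=> s0; apply/negP => /eqP H.
  have : s *: z = 0 by apply/eqP; rewrite -(inj_eq (addrI w)) H addr0.
  by move/eqP; rewrite scaler_eq0 (negbTE s0) /=; apply/negP/eqP.
have h1 : dotv c (w + eps *: z) < dotv c w.
  by apply: Hc; [apply: Pin; rewrite gtr0_norm | apply: ne; exact: lt0r_neq0].
have h2 := Hc _ (Pin (- eps) _) (ne _ _).
move: h1; rewrite dotvDr dotvZr => h1.
move: h2; rewrite normrN gtr0_norm // lexx oppr_eq0 (lt0r_neq0 eps0).
move=> /(_ isT isT); rewrite dotvDr dotvZr mulNr => h2.
move: h1 h2; clear; lra.
Qed.


Lemma sum_face (T : pred 'I_k) x : P x ->
  dotv (\sum_(i | T i) av i) x <= \sum_(i | T i) bv i.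
Proof. move/polyhP=> Px; rewrite dotv_suml; apply: ler_sum => i _; exact: Px. Qed.

Lemma sum_face_eq (T : pred 'I_k) x : P x ->
  dotv (\sum_(i | T i) av i) x = \sum_(i | T i) bv i ->
  forall i, T i -> dotv (av i) x = bv i.
Proof.
move=> Px' He i0 Ti0; apply: NNPP => Hne.
have Px := Px'; move/polyhP: Px => Px.
have lt0 : dotv (av i0) x < bv i0 by rewrite lt_def Px andbT; apply/eqP => /esym.
move: He; rewrite dotv_suml (bigD1 i0) //= [X in _ = X](bigD1 i0) //= => He.
have : \sum_(i | T i && (i != i0)) dotv (av i) x <= \sum_(i | T i && (i != i0)) bv i.
  by apply: ler_sum => i _; exact: Px.
move: He lt0; clear; lra.
Qed.

Lemma vertex_of_ker w : P w ->
  (forall z, (forall i, tight w i -> dotv (av i) z = 0) -> z = 0) -> is_vertex P w.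
Proof.
move=> Pw Hk; split=> //; exists (\sum_(i | tight w i) av i) => x Px xw.
have Ew : dotv (\sum_(i | tight w i) av i) w = \sum_(i | tight w i) bv i.
  by rewrite dotv_suml; apply: eq_bigr => i /eqP.
rewrite Ew lt_def sum_face // andbT; apply/negP => /eqP He.
have := sum_face_eq Px (esym He) => Ht.
have : x - w = 0.
  apply: Hk => i Ti; rewrite dotvBr Ht // (eqP Ti) subrr //.
by move/eqP; rewrite subr_eq0 (negbTE xw).
Qed.

Lemma tight_inj v w : is_vertex P v -> is_vertex P w ->
  (forall i, tight v i = tight w i) -> v = w.
Proof.
move=> Vv Vw Ht; apply/eqP; rewrite -subr_eq0; apply/eqP.
apply: (vertex_ker Vw) => i Ti; rewrite dotvBr.
have := Ti; rewrite -Ht => Tv; by rewrite (eqP Tv) (eqP Ti) subrr.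
Qed.


Lemma fmin (I : finType) (J : pred I) (f : I -> R) i0 : J i0 ->
  exists i, J i /\ forall j, J j -> f i <= f j.
Proof. move=> Ji0; case: (@arg_minP _ _ _ i0 J f Ji0) => i Ji Hi; by exists i. Qed.

Definition nzset w y := [set i | tight w i && (dotv (av i) y != 0)].

Lemma ray_step w c y : is_vertex P w ->
  (forall i, tight w i -> dotv (av i) y <= 0) -> 0 < dotv c y ->
  ~ (forall z, (forall i, tight w i -> dotv (av i) y = 0 -> dotv (av i) z = 0) ->
       exists s, z = s *: y) ->
  exists y', [/\ (forall i, tight w i -> dotv (av i) y' <= 0), 0 < dotv c y',
   (forall i, tight w i -> dotv (av i) y = 0 -> dotv (av i) y' = 0) &
   (#|nzset w y'| < #|nzset w y|)%N].
Proof.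
move=> Vw Hy Hc Hns.
have [z Hz] : exists z, ~ ((forall i, tight w i -> dotv (av i) y = 0 -> dotv (av i) z = 0) ->
       exists s, z = s *: y).
  by apply: not_all_ex_not.
have [Hzk Hzs] : (forall i, tight w i -> dotv (av i) y = 0 -> dotv (av i) z = 0) /\
   ~ (exists s, z = s *: y).
  by split; [apply: NNPP => H; apply: Hz => /H | move=> H; apply: Hz].
pose z' := dotv c y *: z - dotv c z *: y.
have z'k i : tight w i -> dotv (av i) y = 0 -> dotv (av i) z' = 0.
  by move=> Ti Hi; rewrite dotvBr !dotvZr Hi (Hzk i Ti Hi) !mulr0 subrr.
have cz' : dotv c z' = 0 by rewrite dotvBr !dotvZr mulrC subrr.
have z'0 : z' != 0.
  apply/eqP => H; apply: Hzs; exists (dotv c z / dotv c y).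
  move/eqP: H; rewrite subr_eq0 => /eqP H.
  by rewrite mulrC -scalerA -H scalerA mulVf ?scale1r // lt0r_neq0.
have [i [Ti Hi]] : exists i, tight w i /\ dotv (av i) z' != 0.
  apply: NNPP => H; apply: (negP z'0); apply/eqP; apply: (vertex_ker Vw) => i Ti.
  apply: NNPP => H'; apply: H; exists i; split => //; exact/eqP.
pose z'' := if 0 < dotv (av i) z' then z' else - z'.
have z''k j : tight w j -> dotv (av j) y = 0 -> dotv (av j) z'' = 0.
  by move=> Tj Hj; rewrite /z''; case: ifP => _; rewrite ?dotvNr z'k // oppr0.
have cz'' : dotv c z'' = 0 by rewrite /z''; case: ifP => _; rewrite ?dotvNr cz' ?oppr0.
have iz'' : 0 < dotv (av i) z''.
  rewrite /z''; case: ifP => // /negbT; rewrite dotvNr -leNgt oppr_gt0 => H.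
  by rewrite lt_def eq_sym Hi H.
pose J j := tight w j && (0 < dotv (av j) z'').
have Ji : J i by rewrite /J Ti iz''.
have [i1 [/andP [Ti1 Pi1] Mi1]] := fmin (fun j => - dotv (av j) y / dotv (av j) z'') Ji.
have Jneg j : J j -> dotv (av j) y < 0.
  case/andP => Tj Pj; rewrite lt_def Hy // andbT; apply/eqP => Hj.
  by move: Pj; rewrite z''k // ltxx.
pose t := - dotv (av i1) y / dotv (av i1) z''.
have t0 : 0 < t by rewrite /t divr_gt0 // oppr_gt0 Jneg // /J Ti1.
exists (y + t *: z''); split.
- move=> j Tj; rewrite dotvDr dotvZr.
  case: (ltP 0 (dotv (av j) z'')) => Hj.
    have : t <= - dotv (av j) y / dotv (av j) z'' by apply: Mi1; rewrite /J Tj Hj.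
    by rewrite ler_pdivlMr // => H; move: H; clear; lra.
  have := Hy j Tj; have := ltW t0; move: Hj; clear; nra.
- by rewrite dotvDr dotvZr cz'' mulr0 addr0.
- by move=> j Tj Hj; rewrite dotvDr dotvZr Hj z''k // mulr0 addr0.
apply: proper_card; apply/properP; split.
  apply/subsetP => j; rewrite !inE => /andP [Tj Hj]; rewrite Tj /=.
  by apply: contra Hj => /eqP Hj; rewrite dotvDr dotvZr Hj z''k // mulr0 addr0.
exists i1.
  by rewrite inE Ti1 /= ltr0_neq0 // Jneg // /J Ti1 Pi1.
rewrite inE Ti1 /= negbK dotvDr dotvZr /t divfK ?subrr ?eqxx // lt0r_neq0 //.
Qed.


Lemma ray w c y : is_vertex P w ->
  (forall i, tight w i -> dotv (av i) y <= 0) -> 0 < dotv c y ->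
  exists r, [/\ (forall i, tight w i -> dotv (av i) r <= 0), 0 < dotv c r,
   (forall i, tight w i -> dotv (av i) y = 0 -> dotv (av i) r = 0) &
   (forall z, (forall i, tight w i -> dotv (av i) r = 0 -> dotv (av i) z = 0) ->
       exists s, z = s *: r)].
Proof.
move=> Vw; move: (leqnn #|nzset w y|); move: {2}#|nzset w y| => N.
elim: N y => [|N IH] y HN Hy Hc.
  case: (classic (forall z, (forall i, tight w i -> dotv (av i) y = 0 -> dotv (av i) z = 0) ->
       exists s, z = s *: y)) => Hsp; first by exists y; split.
  by have [y' [_ _ _]] := ray_step Vw Hy Hc Hsp; rewrite leqn0 in HN; rewrite (eqP HN).
case: (classic (forall z, (forall i, tight w i -> dotv (av i) y = 0 -> dotv (av i) z = 0) ->
     exists s, z = s *: y)) => Hsp; first by exists y; split.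
have [y' [H1 H2 H3 H4]] := ray_step Vw Hy Hc Hsp.
have [|r [R1 R2 R3 R4]] := IH y' _ H1 H2; first by rewrite -ltnS; apply: leq_trans H4 HN.
exists r; split=> // i Ti Hi; apply: R3 => //; exact: H3.
Qed.


Lemma cV_neq0 (r : 'cV[R]_n) : r != 0 -> exists j, r j 0 != 0.
Proof.
move=> r0; apply: NNPP => H; apply: (negP r0); apply/eqP/matrixP => j j1.
rewrite (ord1 j1) mxE; apply: NNPP => Hj; apply: H; exists j; by apply/eqP.
Qed.

Lemma blocking w r : bounded P -> P w -> r != 0 -> exists i, 0 < dotv (av i) r.
Proof.
move=> [M HM] Pw r0; apply: NNPP => H.
have Hn i : dotv (av i) r <= 0 by rewrite leNgt; apply/negP => Hi; apply: H; exists i.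
have [j rj] := cV_neq0 r0.
have Pin s : 0 <= s -> P (w + s *: r).
  move=> s0; apply/polyhP => i; rewrite dotvDr dotvZr.
  move/polyhP: Pw => /(_ i); have := Hn i; move: s0; clear; nra.
have M0 : `|w j 0| <= M := HM _ Pw j.
have rpos : 0 < `|r j 0| by rewrite normr_gt0.
pose s := (M + `|w j 0| + 1) / `|r j 0|.
have s0 : 0 <= s.
  apply: divr_ge0; last exact: ltW.
  have := normr_ge0 (w j 0); move: M0; clear; lra.
have := HM _ (Pin s s0) j; rewrite !mxE.
have := lerB_normD (s * r j 0) (w j 0); rewrite normrM (ger0_norm s0) /s divfK ?lt0r_neq0 //.
rewrite addrC; move: M0; clear; lra.
Qed.


Lemma edge_of_ray w r : bounded P -> is_vertex P w ->
  (forall i, tight w i -> dotv (av i) r <= 0) -> r != 0 ->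
  (forall z, (forall i, tight w i -> dotv (av i) r = 0 -> dotv (av i) z = 0) ->
     exists s, z = s *: r) ->
  exists2 t, 0 < t & is_edge P w (w + t *: r) /\
    (forall i, tight w i -> dotv (av i) r = 0 -> dotv (av i) (w + t *: r) = bv i).
Proof.
move=> Bd Vw Hr r0 Hk.
have Pw : P w by case: Vw.
have Pw' := Pw; move/polyhP: Pw' => Pwi.
have [i0 Hi0] := blocking Bd Pw r0.
pose J i := 0 < dotv (av i) r.
have [i1 [Ji1 Mi1]] := fmin (fun i => (bv i - dotv (av i) w) / dotv (av i) r) (Hi0 : J i0).
have {}Ji1 : 0 < dotv (av i1) r := Ji1.
have nT1 : ~~ tight w i1.
  by apply/negP => T1; move: (Hr _ T1); rewrite leNgt Ji1.
have sl1 : 0 < bv i1 - dotv (av i1) w.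
  by rewrite subr_gt0 lt_def Pwi andbT eq_sym.
pose t := (bv i1 - dotv (av i1) w) / dotv (av i1) r.
have t0 : 0 < t by rewrite /t divr_gt0.
have Et1 : t * dotv (av i1) r = bv i1 - dotv (av i1) w by rewrite /t divfK // lt0r_neq0.
pose w' := w + t *: r.
have Pw' : P w'.
  apply/polyhP => i; rewrite /w' dotvDr dotvZr.
  case: (ltP 0 (dotv (av i) r)) => Hi.
    have : t <= (bv i - dotv (av i) w) / dotv (av i) r by apply: Mi1.
    by rewrite ler_pdivlMr // => H; move: H; clear; lra.
  have := Pwi i; have := ltW t0; move: Hi; clear; nra.
have T0w' i : tight w i -> dotv (av i) r = 0 -> dotv (av i) w' = bv i.
  by move=> Ti Hi; rewrite /w' dotvDr dotvZr Hi mulr0 addr0 (eqP Ti).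
have T1w' : dotv (av i1) w' = bv i1.
  by rewrite /w' dotvDr dotvZr Et1 addrC subrK.
exists t => //; split; last exact: T0w'.
have Vw' : is_vertex P w'.
  apply: vertex_of_ker => // z Hz.
  have [s Hs] := Hk z (fun i Ti Hi => Hz i (introT eqP (T0w' i Ti Hi))).
  have : dotv (av i1) z = 0 by apply: Hz; apply/eqP.
  rewrite Hs dotvZr => /eqP; rewrite mulf_eq0 (negbTE (lt0r_neq0 Ji1)) orbF => /eqP ->.
  by rewrite scale0r.
split=> //; split=> //; split.
  apply/negP => /eqP He.
  have : t *: r = 0 by apply/eqP; rewrite -(inj_eq (addrI w)) -He addr0.
  by move/eqP; rewrite scaler_eq0 (negbTE r0) (negbTE (lt0r_neq0 t0)).
pose T0 i := tight w i && (dotv (av i) r == 0).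
exists (\sum_(i | T0 i) av i).
have Ew : dotv (\sum_(i | T0 i) av i) w = \sum_(i | T0 i) bv i.
  by rewrite dotv_suml; apply: eq_bigr => i /andP [/eqP ->].
split.
  rewrite Ew dotv_suml; apply: eq_bigr => i /andP [Ti /eqP Hi]; exact: (esym (T0w' i Ti Hi)).
split; first by move=> x Px; rewrite Ew; exact: sum_face.
move=> x Px Ex.
have Hx := sum_face_eq Px (etrans Ex Ew).
have [sc Hs] : exists sc, x - w = sc *: r.
  apply: Hk => i Ti Hi; rewrite dotvBr Hx; last by rewrite /T0 Ti Hi eqxx.
  by rewrite (eqP Ti) subrr.
have Ex' : x = w + sc *: r by rewrite -Hs addrC subrK.
have [i2 [Ti2 Hi2]] : exists i, tight w i /\ dotv (av i) r != 0.
  apply: NNPP => H; apply: (negP r0); apply/eqP; apply: (vertex_ker Vw) => i Ti.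
  apply: NNPP => H'; apply: H; exists i; split => //; by apply/eqP.
have neg2 : dotv (av i2) r < 0 by rewrite lt_def eq_sym Hi2 Hr.
have s0 : 0 <= sc.
  move/polyhP: Px => /(_ i2); rewrite Ex' dotvDr dotvZr (eqP Ti2).
  move: neg2; clear; nra.
have st : sc <= t.
  move/polyhP: Px => /(_ i1); rewrite Ex' dotvDr dotvZr => H.
  have : sc * dotv (av i1) r <= t * dotv (av i1) r by move: H Et1; clear; lra.
  by rewrite ler_pM2r.
exists (sc / t); split; first by rewrite divr_ge0 // ltW.
split; first by rewrite ler_pdivrMr // mul1r.
rewrite Ex' /w' scalerDr scalerA divfK ?lt0r_neq0 // scalerBl scale1r.
by rewrite addrA subrK.
Qed.


Definition inG (S : {set 'I_k}) x := P x /\ forall i, i \in S -> dotv (av i) x = bv i.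

Lemma inG0 x : inG set0 x <-> P x.
Proof. by split=> [[]|Px] //; split=> // i; rewrite inE. Qed.

Lemma edge_vertex2 w w' : is_edge P w w' -> is_vertex P w'.
Proof. by case=> _ []. Qed.

Lemma improve S w c x : bounded P -> is_vertex P w -> inG S w -> inG S x ->
  dotv c w < dotv c x ->
  exists w', [/\ is_edge P w w', inG S w' & dotv c w < dotv c w'].
Proof.
move=> Bd Vw [Pw Sw] [Px Sx] Hc.
have Hy i : tight w i -> dotv (av i) (x - w) <= 0.
  by move=> Ti; rewrite dotvBr (eqP Ti) subr_le0; move/polyhP: Px; apply.
have Hcy : 0 < dotv c (x - w) by rewrite dotvBr subr_gt0.
have [r [R1 R2 R3 R4]] := ray Vw Hy Hcy.
have r0 : r != 0 by apply/negP => /eqP r0; move: R2; rewrite r0 dotv0r ltxx.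
have [t t0 [E T]] := edge_of_ray Bd Vw R1 r0 R4.
exists (w + t *: r); split=> //.
  split; first by case: (edge_vertex2 E).
  move=> i Si; have Ti : tight w i by rewrite /tight Sw.
  apply: T => //; apply: R3 => //; by rewrite dotvBr Sw // Sx // subrr.
by rewrite dotvDr dotvZr ltrDl pmulr_rgt0.
Qed.

Definition tset x := [set i | tight x i].

Lemma vmin (Q : 'cV[R]_n -> Prop) (f : 'cV[R]_n -> R) :
  (forall x, Q x -> is_vertex P x) -> (exists x, Q x) ->
  exists x0, Q x0 /\ forall x, Q x -> f x0 <= f x.
Proof.
move=> QV [x Qx].
suff H : forall N (X : {set {set 'I_k}}), (#|X| <= N)%N -> (exists x, Q x /\ tset x \in X) ->
  exists x0, [/\ Q x0, tset x0 \in X & forall x, Q x -> tset x \in X -> f x0 <= f x].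
  have [|x0 [Q0 _ H0]] := H _ [set: {set 'I_k}] (leqnn _); first by exists x; rewrite inE.
  by exists x0; split=> // z Qz; apply: H0; rewrite ?inE.
have teq y z : Q y -> Q z -> tset y = tset z -> y = z.
  move=> Qy Qz /setP He; apply: tight_inj; try exact: QV.
  by move=> i; move: (He i); rewrite !inE.
elim=> [|N IH] X HX [y [Qy Xy]].
  by move: HX; rewrite leqn0 => /eqP /cards0_eq HX; move: Xy; rewrite HX inE.
pose X' := X :\ tset y.
have HX' : (#|X'| <= N)%N.
  by rewrite -ltnS; apply: leq_trans HX; rewrite /X' (cardsD1 (tset y) X) Xy.
case: (classic (exists z, Q z /\ tset z \in X')) => Hz.
  have [y0 [Q0 X0 H0]] := IH X' HX' Hz.
  have X0' : tset y0 \in X by move: X0; rewrite inE => /andP [].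
  case: (leP (f y) (f y0)) => Hf.
    exists y; split=> // z Qz Xz.
    case: (eqVneq (tset z) (tset y)) => [E|E]; first by rewrite (teq _ _ Qz Qy E).
    by apply: le_trans Hf (H0 _ Qz _); rewrite /X' !inE E.
  exists y0; split=> // z Qz Xz.
  case: (eqVneq (tset z) (tset y)) => [E|E]; first by rewrite (teq _ _ Qz Qy E) ltW.
  by apply: H0; rewrite // /X' !inE E.
exists y; split=> // z Qz Xz.
case: (eqVneq (tset z) (tset y)) => [E|E]; first by rewrite (teq _ _ Qz Qy E).
by exfalso; apply: Hz; exists z; rewrite /X' !inE E.
Qed.

Lemma locopt S w psi : bounded P -> is_vertex P w -> inG S w ->
  (forall w', is_edge P w w' -> inG S w' -> dotv psi w' <= dotv psi w) ->
  forall x, inG S x -> dotv psi x <= dotv psi w.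
Proof.
move=> Bd Vw Gw H x Gx; rewrite leNgt; apply/negP => Hlt.
have [w' [E G' L]] := improve Bd Vw Gw Gx Hlt.
by move: (H _ E G'); rewrite leNgt L.
Qed.

Lemma ratio S w psi g : bounded P -> is_vertex P w -> inG S w ->
  (forall x, inG S x -> dotv psi x <= dotv psi w) ->
  (exists x, inG S x /\ dotv g w < dotv g x) ->
  exists w1 t0, [/\ is_edge P w w1, inG S w1, dotv g w < dotv g w1, 0 <= t0 &
   (dotv psi w1 + t0 * dotv g w1 = dotv psi w + t0 * dotv g w /\
   forall x, inG S x -> dotv psi x + t0 * dotv g x <= dotv psi w + t0 * dotv g w)].
Proof.
move=> Bd Vw Gw Hpsi [x [Gx Hx]].
pose Q w' := [/\ is_edge P w w', inG S w' & dotv g w < dotv g w'].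
pose f w' := - (dotv psi w' - dotv psi w) / (dotv g w' - dotv g w).
have QV : forall y, Q y -> is_vertex P y by move=> y [E _ _]; exact: edge_vertex2 E.
have QE : exists y, Q y by exact: improve Bd Vw Gw Gx Hx.
have [w1 [[E1 G1 L1] M1]] := vmin f QV QE.
have gpos : 0 < dotv g w1 - dotv g w by rewrite subr_gt0.
pose t0 := f w1.
have t00 : 0 <= t0.
  rewrite /t0 /f; apply: divr_ge0; last exact: ltW.
  by rewrite oppr_ge0 subr_le0; exact: Hpsi.
have Et : t0 * (dotv g w1 - dotv g w) = - (dotv psi w1 - dotv psi w).
  by rewrite /t0 /f divfK // lt0r_neq0.
have Hl : forall x, inG S x -> dotv (psi + t0 *: g) x <= dotv (psi + t0 *: g) w.
  apply: locopt => // w'' E'' G''; rewrite !dotvDl !dotvZl.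
  case: (ltP (dotv g w) (dotv g w'')) => Hg.
    have : t0 <= f w'' by apply: M1.
    rewrite /f ler_pdivlMr ?subr_gt0 // => H; move: H; clear; lra.
  have := Hpsi _ G''; move: Hg t00; clear; nra.
exists w1, t0; split=> //; split; first by move: Et; clear; lra.
by move=> y Gy; move: (Hl _ Gy); rewrite !dotvDl !dotvZl.
Qed.

Lemma shadow_step S w a c beta : bounded P -> is_vertex P w -> inG S w -> 0 <= beta ->
  (forall x, inG S x -> dotv a x + beta * dotv c x <= dotv a w + beta * dotv c w) ->
  (0 < beta \/ forall x, inG S x -> dotv a x = dotv a w -> dotv c x <= dotv c w) ->
  (exists x, inG S x /\ dotv c w < dotv c x) ->
  exists w' beta', [/\ is_edge P w w', inG S w', dotv c w < dotv c w', dotv a w' < dotv a w &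
     (0 < beta' /\
   forall x, inG S x -> dotv a x + beta' * dotv c x <= dotv a w' + beta' * dotv c w')].
Proof.
move=> Bd Vw Gw b0 Hm Hd Hx.
have Hm' : forall x, inG S x -> dotv (a + beta *: c) x <= dotv (a + beta *: c) w.
  by move=> x Gx; rewrite !dotvDl !dotvZl; apply: Hm.
have [w1 [t0 [E1 G1 L1 T0 [Eq Mx]]]] := ratio Bd Vw Gw Hm' Hx.
move: Eq Mx; rewrite !dotvDl !dotvZl => Eq Mx.
have bp : 0 < beta + t0.
  rewrite ltNge; apply/negP => Hn.
  have /andP [/eqP be /eqP te] : (beta == 0) && (t0 == 0).
    by rewrite -paddr_eq0 // eq_le Hn addr_ge0.
  case: Hd => [|Hd]; first by rewrite be ltxx.
  suff : dotv c w1 <= dotv c w by rewrite leNgt L1.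
  apply: Hd => //; by move: Eq; rewrite be te !mul0r !addr0.
exists w1, (beta + t0); split=> //; last split=> //.
  have : 0 < (beta + t0) * (dotv c w1 - dotv c w) by rewrite mulr_gt0 // subr_gt0.
  by move: Eq; clear; nra.
move=> x Gx; have := Mx _ Gx; rewrite dotvDl dotvZl; move: Eq; rewrite !mulrDl; clear; lra.
Qed.

Lemma uniq_max c u v : bounded P -> generic P c -> is_vertex P u -> is_vertex P v ->
  (forall x, P x -> dotv c x <= dotv c u) -> (forall x, P x -> dotv c x <= dotv c v) -> u = v.
Proof.
move=> Bd Gc Vu Vv Mu Mv; apply: NNPP => uv.
have [Pv [g Hg]] := Vv.
have Pu : P u by case: Vu.
have guv : dotv g u < dotv g v by apply: Hg => //; apply/eqP.
have H1 : forall x, inG set0 x -> dotv c x <= dotv c u by move=> x /inG0 Px; apply: Mu.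
have H2 : exists x, inG set0 x /\ dotv g u < dotv g x by exists v; split=> //; apply/inG0.
have [w1 [t0 [E1 _ _ T0 [Eq Mx]]]] := ratio Bd Vu (proj2 (inG0 u) Pu) H1 H2.
have := Mx v (proj2 (inG0 v) Pv).
have := Mu _ Pv; have := Mv _ Pu => h1 h2 h3.
have te : t0 = 0.
  have : t0 * (dotv g v - dotv g u) <= 0 by move: h1 h2 h3; clear; lra.
  rewrite pmulr_lle0 ?subr_gt0 // => H; apply/eqP; rewrite eq_le H T0.
  done.
have Pw1 : P w1 by case: (edge_vertex2 E1).
have Hcw : dotv c w1 = dotv c u by move: Eq; rewrite te !mul0r !addr0.
by move: (Gc _ _ E1); rewrite Hcw eqxx.
Qed.


Lemma mono_last c v p : Defs.mono_path P c v p -> is_vertex P (last v p).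
Proof. by elim: p v => [|w p IH] v //= [_ [_ H]]; exact: IH. Qed.

Lemma mono_cat c v p1 p2 : Defs.mono_path P c v p1 -> Defs.mono_path P c (last v p1) p2 ->
  Defs.mono_path P c v (p1 ++ p2).
Proof.
elim: p1 v => [|w p IH] v //= [E [L H]] H2; split=> //; split=> //; exact: IH.
Qed.

Definition cntlt (s : seq R) (al : R) : nat := count (fun t => t < al) s.

Lemma count_lt_strict (s : seq R) (al al' : R) : al' < al -> al' \in s ->
  (cntlt s al' < cntlt s al)%N.
Proof.
rewrite /cntlt.
elim: s => //= t s IH Hlt; rewrite inE => /orP [/eqP <-|Hin].
  rewrite ltxx Hlt add0n add1n ltnS; apply: sub_count => u /= Hu; exact: lt_trans Hu Hlt.
have hh : (nat_of_bool (t < al')%R <= nat_of_bool (t < al)%R)%N.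
  by case: (boolP (t < al')) => // H; rewrite (lt_trans H Hlt).
apply: leq_ltn_trans (leq_add hh (leqnn _)) _; rewrite ltn_add2l; exact: IH.
Qed.

Lemma shadow_path S a c (s : seq R) : bounded P ->
  (forall x, is_vertex P x -> inG S x -> dotv a x \in s) ->
  forall N w beta, (cntlt s (dotv a w) <= N)%N ->
  is_vertex P w -> inG S w -> 0 <= beta ->
  (forall x, inG S x -> dotv a x + beta * dotv c x <= dotv a w + beta * dotv c w) ->
  (0 < beta \/ forall x, inG S x -> dotv a x = dotv a w -> dotv c x <= dotv c w) ->
  exists p, [/\ Defs.mono_path P c w p, inG S (last w p),
    (forall x, inG S x -> dotv c x <= dotv c (last w p)) &
    (size p <= cntlt s (dotv a w))%N].
Proof.
move=> Bd Hs; elim=> [|N IH] w beta HN Vw Gw b0 Hm Hd;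
  (case: (classic (exists x, inG S x /\ dotv c w < dotv c x)) => Hx; last first;
  [exists [::]; split => // x Gx; rewrite leNgt; apply/negP => H; apply: Hx; exists x; done|]);
  have [w' [beta' [E G' L1 L2 [bp Mx]]]] := shadow_step Bd Vw Gw b0 Hm Hd Hx;
  have Hc := count_lt_strict L2 (Hs _ (edge_vertex2 E) G').
  by move: (leq_trans Hc HN); rewrite ltn0.
have [|p [P1 P2 P3 P4]] := IH w' beta' _ (edge_vertex2 E) G' (ltW bp) Mx (or_introl bp).
  by rewrite -ltnS; apply: leq_trans Hc HN.
exists (w' :: p); split => //=.
exact: leq_ltn_trans P4 Hc.
Qed.


Lemma dotv_sumr (I : finType) (Q : pred I) (F : I -> 'cV[R]_n) c :
  dotv c (\sum_(i | Q i) F i) = \sum_(i | Q i) dotv c (F i).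
Proof.
rewrite /dotv exchange_big /=; apply: eq_bigr => j _.
by rewrite summxE mulr_sumr.
Qed.

Lemma not_row_free_ker m (M : 'M[R]_(m, n)) : ~ row_free M ->
  exists2 u : 'rV[R]_m, u != 0 & u *m M = 0.
Proof.
move=> Hn.
have K0 : kermx M != 0.
  rewrite -mxrank_eq0 mxrank_ker subn_eq0 -ltnNge.
  by rewrite ltn_neqAle rank_leq_row andbT; apply/negP; move: Hn; rewrite /row_free.
have [i Hi] : exists i, row i (kermx M) != 0.
  apply: NNPP => H; apply: (negP K0); apply/eqP/row_matrixP => i.
  rewrite row0; apply: NNPP => H'; apply: H; exists i; exact/eqP.
exists (row i (kermx M)) => //.
by rewrite -row_mul mulmx_ker row0.
Qed.

Definition pt2 v x : 'I_2 -> 'cV[R]_n := fun l => if val l == 0%N then v else x.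

Lemma aff2 v x : x != v -> aff_indep (pt2 v x).
Proof.
move=> xv; rewrite /aff_indep; apply: inj_row_free => u Hu.
have [j hj] : exists j, (x - v) j 0 != 0 by apply: cV_neq0; rewrite subr_eq0.
have := congr1 (fun M : 'M[R]_(1, n) => M 0 j) Hu; rewrite !mxE big_ord1 mxE /pt2 /=.
move/eqP; rewrite mulf_eq0; move: hj; rewrite !mxE => /negbTE -> ; rewrite orbF => /eqP H0.
by apply/matrixP => i l; rewrite (ord1 i) (ord1 l) mxE H0.
Qed.

Definition pt3 v w x : 'I_3 -> 'cV[R]_n :=
  fun l => if val l == 0%N then v else if val l == 1%N then w else x.

Lemma seg_dep v w x : w != v -> ~ aff_indep (pt3 v w x) -> exists s, x - v = s *: (w - v).
Proof.
move=> wv Hn.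
have [u u0 Hu] := not_row_free_ker Hn.
have Ej jj : u 0 ord0 * (w jj 0 - v jj 0) + u 0 (lift ord0 ord0) * (x jj 0 - v jj 0) = 0.
  have := congr1 (fun M : 'M[R]_(1, n) => M 0 jj) Hu; rewrite !mxE !big_ord_recl big_ord0 !mxE /pt3 /=.
  by rewrite addr0.
case: (eqVneq (u 0 (lift ord0 ord0)) 0) => H1.
  exfalso; have H0 : u 0 ord0 != 0.
    apply/negP => /eqP H0; apply: (negP u0); apply/eqP/matrixP => i l.
    rewrite (ord1 i) mxE; case: l => [[|[|l]] Hl] //.
      by rewrite -H0; congr (u _ _); apply: val_inj.
    by rewrite -H1; congr (u _ _); apply: val_inj.
  apply: (negP wv); rewrite -subr_eq0; apply/eqP/matrixP => jj j1.
  rewrite (ord1 j1) !mxE; have := Ej jj; rewrite H1 mul0r addr0 => /eqP.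
  by rewrite mulf_eq0 (negbTE H0) /= => /eqP.
exists (- u 0 ord0 / u 0 (lift ord0 ord0)); apply/matrixP => jj j1; rewrite (ord1 j1) !mxE.
have := Ej jj => E; apply: (mulfI H1).
rewrite mulrA [_ * (- _ / _)]mulrC divfK // mulNr.
by apply/eqP; rewrite -addr_eq0 [X in X == _]addrC E.
Qed.


Definition qext j (p : 'I_j.+2 -> 'cV[R]_n) x : 'I_j.+3 -> 'cV[R]_n :=
  fun l => if val l == 0%N then p ord0 else if val l == 1%N then x
           else p (inord (val l).-1).

Lemma aff_ext j (p : 'I_j.+2 -> 'cV[R]_n) x (a : 'cV[R]_n) : aff_indep p ->
  (forall l, dotv a (p l) = dotv a (p ord0)) -> dotv a x != dotv a (p ord0) ->
  aff_indep (qext p x).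
Proof.
move=> Hp Ha Hx; rewrite /aff_indep; apply: inj_row_free => u Hu.
pose u' : 'rV[R]_j.+1 := \row_(i < j.+1) u 0 (lift ord0 i).
have Eq l : qext p x (lift ord0 (lift ord0 l)) = p (lift ord0 l).
  rewrite /qext /=; congr p; apply: val_inj; rewrite /= add0n inordK //.
  by rewrite /bump /= add1n ltnS ltn_ord.
have Ex : qext p x (lift ord0 ord0) = x by [].

have E0 : qext p x ord0 = p ord0 by [].
have Ej jj : u 0 ord0 * (x jj 0 - p ord0 jj 0) +
    \sum_i u' 0 i * (p (lift ord0 i) jj 0 - p ord0 jj 0) = 0.
  have := congr1 (fun M : 'M[R]_(1, n) => M 0 jj) Hu; rewrite !mxE big_ord_recl !mxE Ex E0.
  move=> H; apply: etrans H; congr (_ + _); apply: eq_bigr => i _; by rewrite !mxE Eq.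
pose y := u 0 ord0 *: (x - p ord0) + \sum_i u' 0 i *: (p (lift ord0 i) - p ord0).
have y0 : y = 0.
  apply/matrixP => jj j1; rewrite (ord1 j1) !mxE summxE; apply: etrans (Ej jj).
  congr (_ + _).
  by apply: eq_bigr => i _; rewrite !mxE.
have u00 : u 0 ord0 = 0.
  have := congr1 (dotv a) y0; rewrite dotv0r /y dotvDr dotvZr dotv_sumr big1.
    rewrite addr0 => /eqP; rewrite mulf_eq0 dotvBr subr_eq0 (negbTE Hx) orbF.
    by move/eqP.
  by move=> i _; rewrite dotvZr dotvBr Ha subrr mulr0.
have u'0 : u' = 0.
  apply: (row_free_inj Hp); rewrite mul0mx; apply/matrixP => i jj.
  rewrite (ord1 i) !mxE; have := Ej jj; rewrite u00 mul0r add0r => H; apply: etrans H.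
  by apply: eq_bigr => l _; rewrite !mxE.
apply/matrixP => i l; rewrite (ord1 i) [RHS]mxE.
case: (unliftP ord0 l) => [l'|] ->; last exact: u00.
have := congr1 (fun M : 'rV[R]_j.+1 => M 0 l') u'0; by rewrite !mxE.
Qed.


Lemma cntlt_lt (s : seq R) al : al \in s -> (cntlt s al < size s)%N.
Proof.
rewrite /cntlt; elim: s => //= t s IH; rewrite inE => /orP [/eqP ->|H].
  by rewrite ltxx add0n ltnS count_size.
apply: leq_ltn_trans (leq_add (leq_b1 _) (leqnn _)) _; rewrite add1n ltnS; exact: IH.
Qed.

Lemma main_lemma c m : bounded P -> is_level A b m ->
  forall j S v, ~ (exists p : 'I_j.+2 -> 'cV[R]_n, (forall l, inG S (p l)) /\ aff_indep p) ->
  is_vertex P v -> inG S v ->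
  exists p, [/\ Defs.mono_path P c v p, inG S (last v p),
     (forall x, inG S x -> dotv c x <= dotv c (last v p)) & (size p <= (j - 1) * m + 1)%N].
Proof.
move=> Bd Lv; elim=> [|[|j'] IH] S v Hd Vv Gv;
 (case: (classic (exists x, inG S x /\ dotv c v < dotv c x)) => Hx; last first;
  [exists [::]; split => //= x Gx; rewrite leNgt; apply/negP => H; apply: Hx; exists x; done|]);
 have [x [Gx Lx]] := Hx.
- exfalso; apply: Hd; exists (pt2 v x); split.
    by move=> l; rewrite /pt2; case: ifP.
  by apply: aff2; apply/negP => /eqP E; move: Lx; rewrite E ltxx.
- have [w' [E G' L]] := improve Bd Vv Gv Gx Lx.
  exists [:: w']; split => //=.
    by split=> //; split => //; exact: edge_vertex2 E.
  move=> x0 Gx0; rewrite leNgt; apply/negP => L0.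
  have wv : w' != v by apply/negP => /eqP E'; move: L; rewrite E' ltxx.
  have [s Hs] : exists s, x0 - v = s *: (w' - v).
    apply: seg_dep => // HA; apply: Hd; exists (pt3 v w' x0); split=> //.
    by move=> l; rewrite /pt3; case: ifP => _ //; case: ifP.
  have [_ [g Hg]] := edge_vertex2 E.
  have Pv : P v by case: Vv.
  have Px0 : P x0 by case: Gx0.
  have g1 : dotv g v < dotv g w' by apply: Hg; rewrite // eq_sym.
  have g2 : dotv g x0 < dotv g w'.
    by apply: Hg => //; apply/negP => /eqP E'; move: L0; rewrite E' ltxx.
  have ec := congr1 (dotv c) Hs; have eg := congr1 (dotv g) Hs.
  move: ec eg; rewrite !dotvBr !dotvZr !dotvBr => ec eg.
  have s1 : 1 < s.
    have h : 0 < (s - 1) * (dotv c w' - dotv c v).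
      by rewrite mulrBl mul1r -ec subr_gt0 ltrD2r.
    by move: h; rewrite pmulr_lgt0 ?subr_gt0.
  have : 0 < (s - 1) * (dotv g w' - dotv g v) by rewrite mulr_gt0 // subr_gt0.
  rewrite mulrBl mul1r -eg subr_gt0 ltrD2r => H; by move: (lt_trans H g2); rewrite ltxx.
- have [i [Ti Hi]] : exists i, tight v i /\ dotv (av i) x < bv i.
    apply: NNPP => H.
    have : x - v = 0.
      apply: (vertex_ker Vv) => i Ti; rewrite dotvBr (eqP Ti).
      apply/eqP; rewrite subr_eq0 eq_le; case: Gx => /polyhP -> _ /=.
      by rewrite leNgt; apply/negP => Hlt; apply: H; exists i.
    by move/eqP; rewrite subr_eq0 => /eqP E; move: Lx; rewrite E ltxx.
  pose F := i |: S.
  have GF y : inG F y -> inG S y.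
    by case=> Py Hy; split=> // i' Hi'; apply: Hy; rewrite inE Hi' orbT.
  have aF y : inG F y -> dotv (av i) y = bv i.
    by case=> _ Hy; apply: Hy; rewrite /F !inE eqxx.
  have GvF : inG F v.
    split; first by case: Gv.
    move=> i'; rewrite !inE => /orP [/eqP ->|Hi']; first exact/eqP.
    by case: Gv => _; apply.
  have HdF : ~ (exists p : 'I_(j'.+1).+2 -> 'cV[R]_n, (forall l, inG F (p l)) /\ aff_indep p).
    move=> [p [Hp Ap]]; apply: Hd; exists (qext p x); split.
      move=> l; rewrite /qext; case: ifP => _; first exact: GF.
      case: ifP => _ //; exact: GF.
    apply: (aff_ext (a := av i)) => //.
      by move=> l; rewrite !aF.
    by rewrite (aF (p ord0) (Hp ord0)) (lt_eqF Hi).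
  have [p1 [M1 G1 X1 S1]] := IH F v HdF Vv GvF.
  set u := last v p1 in M1 G1 X1 S1.
  have Vu := mono_last M1.
  have [s [Hs Hsv]] := Lv i.
  have Hsv' : forall y, is_vertex P y -> inG S y -> dotv (av i) y \in s.
    by move=> y Vy _; exact: Hsv.
  have Hm : forall y, inG S y -> dotv (av i) y + 0 * dotv c y <= dotv (av i) u + 0 * dotv c u.
    move=> y [Py _]; rewrite !mul0r !addr0 (aF u G1); by move/polyhP: Py.
  have Hd2 : 0 < (0 : R) \/ forall y, inG S y -> dotv (av i) y = dotv (av i) u -> dotv c y <= dotv c u.
    right=> y Gy Ey; apply: X1; split; first by case: Gy.
    move=> i'; rewrite !inE => /orP [/eqP ->|Hi']; first by rewrite Ey aF.
    by case: Gy => _; apply.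
  have [p2 [M2 G2 X2 S2]] := shadow_path Bd Hsv' (leqnn _) Vu (GF _ G1) (lexx 0) Hm Hd2.
  exists (p1 ++ p2); rewrite last_cat; split => //; first exact: mono_cat.
  have Cm : (cntlt s (dotv (av i) u) <= m)%N.
    rewrite -ltnS; apply: leq_trans Hs; apply: cntlt_lt; exact: (Hsv u Vu).
  rewrite size_cat; move: S1 S2 Cm; rewrite !subn1 /= mulSn; move=> h1 h2 h3.
  by rewrite addnC -addnA leq_add // (leq_trans h2 h3).
Qed.

End Poly.

Unset Implicit Arguments.

Theorem mainTheorem3 (R : realFieldType) (n k d m : nat)
    (A : 'M[R]_(k, n)) (b : 'cV[R]_k) :
  irredundant A b ->
  bounded (polyh A b) ->
  has_dim (polyh A b) d ->
  is_level A b m ->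
  monotone_diam_le (polyh A b) ((d - 1) * m + 1)%N.
Proof.
move=> _ Bd [_ Hd] Lv c Gc v vmax Vv Vm Mm.
have Hd' : ~ (exists p : 'I_d.+2 -> 'cV[R]_n,
    (forall l, inG A b set0 (p l)) /\ aff_indep p).
  move=> [p [Hp Ap]]; apply: Hd; exists p; split=> // l; exact/(inG0 A b)/Hp.
have Pv : polyh A b v by case: Vv.
have [p [M G X S]] := main_lemma c Bd Lv Hd' Vv (proj2 (inG0 A b v) Pv).
exists p; split => //; split => //.
apply: (uniq_max Bd Gc (mono_last M) Vm) => // x Px.
by apply: X; apply/inG0.
Qed.
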